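(* Fix any total budget $\mathrm{TB}\in\mathbb N_0$. For any number game $G$, the unique inverse of $G$ (up to equality of games) is $\bar G$; that is, $G+\bar G=0$, and if $G'$ is any game form with $G+G'=0$ then $G'=\bar G$.
   Context: Game forms are defined recursively: $G=\{G^{\mathcal L}\mid G^{\mathcal R}\}$ with finite sets of Left and Right options, and finite birthday. $0=\{\varnothing\mid\varnothing\}$. The conjugate is $\bar G=\{\overline{G^{\mathcal R}}\mid\overline{G^{\mathcal L}}\}$. The budget set for total budget $\mathrm{TB}$ is $\mathcal B=\{0,\dots,\mathrm{TB},\hat 0,\dots,\widehat{\mathrm{TB}}\}$: state $p$ (resp. $\hat p$) means Left holds $p$ dollars and Right holds $\mathrm{TB}-p$, and Right (resp. Left) holds the tie-breaking marker. Play of $(G,\tilde p)$: at every position (terminal ones included) both players bid simultaneously, Left $\ell\in\{0,\dots,p\}$, Right $r\in\{0,\dots,\mathrm{TB}-p\}$. If Left holds the marker (state $\hat p$): if $\ell>r$ Left moves to $(G^L,\widehat{p-\ell})$, or, including the marker (allowed when $\ell\ge r$), to $(G^L,p-\ell)$; if $\ell=r$ Left wins, the marker passes to Right, play continues at $(G^L,p-\ell)$; if $\ell<r$ Right moves to $(G^R,\widehat{p+r})$. Symmetrically when Right holds the marker (state $p$): if $r>\ell$ Right moves to $(G^R,p+r)$ or, including the marker, to $(G^R,\widehat{p+r})$; if $r=\ell$ Right wins, the marker passes to Left, play continues at $(G^R,\widehat{p+r})$; if $r<\ell$ Left moves to $(G^L,p-\ell)$. A player who wins a bid but has no option loses. $o(G,\tilde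 p)\in\{\mathrm L,\mathrm R\}$ is the winner under optimal play; $\mathrm L>\mathrm R$. Disjunctive sum $G+H=\{G^{\mathcal L}+H,G+H^{\mathcal L}\mid G^{\mathcal R}+H,G+H^{\mathcal R}\}$. $G\ge H$ means $o(G+X,\tilde p)\ge o(H+X,\tilde p)$ for all game forms $X$ and all $\tilde p\in\mathcal B$; $G=H$ means $G\ge H$ and $H\ge G$; $G>H$ means $G\ge H$ and not $H\ge G$. A game form $G$ is a number if all its options are numbers and $G^L<G<G^R$ for all $G^L\in G^{\mathcal L}$, $G^R\in G^{\mathcal R}$. An inverse of $G$ is a game form $G'$ with $G+G'=0$. *)

(* Defs.v *)
From Stdlib Require List.
From mathcomp Require Import all_boot.
Set Implicit Arguments. Unset Strict Implicit. Unset Printing Implicit Defensive.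

(* Game forms: finite lists of Left options and Right options
   (finite birthday is automatic for an inductive type). *)
Inductive game : Type := Node : seq game -> seq game -> game.

Definition lefts (G : game) : seq game := let: Node GL _ := G in GL.
Definition rights (G : game) : seq game := let: Node _ GR := G in GR.

Definition zero : game := Node [::] [::].

Fixpoint conj (G : game) : game :=
  let: Node GL GR := G in Node (map conj GR) (map conj GL).

Fixpoint add (G H : game) {struct G} : game :=
  let fix addH (H : game) : game :=
    let: Node HL HR := H in
    Node (map (fun g => add g H) (lefts G) ++ map addH HL)
         (map (fun g => add g H) (rights G) ++ map addH HR)
  in addH H.

(* win TB G p b = true iff Left wins (G, state) under optimal play, where the
   state is: Left holds p dollars, Right holds TB - p, and the tie-breaking
   marker is held by Left iff b = true (b = true is the state \hat p).
   "Left wins" means Left has a bid l in {0..p} such that for every Right bid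
   r in {0..TB-p} the resulting continuation is won by Left. *)
Fixpoint win (TB : nat) (G : game) (p : nat) (b : bool) {struct G} : bool :=
  let: Node GL GR := G in
  [exists l : 'I_p.+1, [forall r : 'I_(TB - p).+1,
    if b then
      if r < l then
        (* Left wins the bid; may keep the marker or hand it over *)
        has (fun g => win TB g (p - l) true || win TB g (p - l) false) GL
      else if l == r :> nat then
        has (fun g => win TB g (p - l) false) GL
      else
        all (fun g => win TB g (p + r) true) GR
    else
      if l < r then
        (* Right wins; may keep the marker or hand it over *)
        all (fun g => win TB g (p + r) false && win TB g (p + r) true) GR
      else if l == r :> nat then
        all (fun g => win TB g (p + r) true) GR
      else
        has (fun g => win TB g (p - l) false) GL ]].

Definition game_ge (TB : nat) (G H : game) : Prop :=
  forall (X : game) (p : nat) (b : bool), p <= TB ->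
    win TB (add H X) p b -> win TB (add G X) p b.

Definition game_eq (TB : nat) (G H : game) : Prop :=
  game_ge TB G H /\ game_ge TB H G.

Definition game_gt (TB : nat) (G H : game) : Prop :=
  game_ge TB G H /\ ~ game_ge TB H G.

Inductive is_number (TB : nat) : game -> Prop :=
  | is_number_intro (GL GR : seq game) :
      (forall g, List.In g GL -> is_number TB g) ->
      (forall g, List.In g GR -> is_number TB g) ->
      (forall g, List.In g GL -> game_gt TB (Node GL GR) g) ->
      (forall g, List.In g GR -> game_gt TB g (Node GL GR)) ->
      is_number TB (Node GL GR).

(* Main.v *)
Require Import Defs.
From mathcomp Require Import all_boot.
Set Warnings "-notation-overridden".
From mathcomp Require Import zify.
Set Implicit Arguments. Unset Strict Implicit. Unset Printing Implicit Defensive.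

Definition game_ind2 (P : game -> Prop)
  (H : forall GL GR, (forall g, List.In g GL -> P g) -> (forall g, List.In g GR -> P g) -> P (Node GL GR)) :
  forall G, P G :=
  fix F G := match G with Node GL GR =>
    H GL GR
      ((fix FL (l : seq game) : forall g, List.In g l -> P g :=
         match l return forall g, List.In g l -> P g with
         | nil => fun g (h : List.In g nil) => False_ind _ h
         | cons x l' => fun g h => match h with
                         | or_introl e => eq_ind x P (F x) g e
                         | or_intror h' => FL l' g h' end end) GL)
      ((fix FL (l : seq game) : forall g, List.In g l -> P g :=
         match l return forall g, List.In g l -> P g with
         | nil => fun g (h : List.In g nil) => False_ind _ h
         | cons x l' => fun g h => match h with
                         | or_introl e => eq_ind x P (F x) g e
                         | or_intror h' => FL l' g h' end end) GR)
  end.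

Lemma addE GL GR HL HR : add (Node GL GR) (Node HL HR) =
  Node (map (fun g => add g (Node HL HR)) GL ++ map (add (Node GL GR)) HL)
       (map (fun g => add g (Node HL HR)) GR ++ map (add (Node GL GR)) HR).
Proof. reflexivity. Qed.

Definition body (w : game -> nat -> bool -> bool) (GL GR : seq game) (p : nat) (b : bool) (l r : nat) : bool :=
    if b then
      if r < l then
        has (fun g => w g (p - l) true || w g (p - l) false) GL
      else if l == r :> nat then
        has (fun g => w g (p - l) false) GL
      else
        all (fun g => w g (p + r) true) GR
    else
      if l < r then
        all (fun g => w g (p + r) false && w g (p + r) true) GR
      else if l == r :> nat then
        all (fun g => w g (p + r) true) GR
      else
        has (fun g => w g (p - l) false) GL.

Lemma winE TB GL GR p b : win TB (Node GL GR) p b =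
  [exists l : 'I_p.+1, [forall r : 'I_(TB - p).+1, body (win TB) GL GR p b l r]].
Proof. reflexivity. Qed.

Lemma winP TB GL GR p b : reflect (exists2 l, l <= p & forall r, r <= TB - p -> body (win TB) GL GR p b l r)
  (win TB (Node GL GR) p b).
Proof.
rewrite winE; apply: (iffP existsP) => [[l /forallP H]|[l Hl H]].
  exists l; first by rewrite -ltnS ltn_ord.
  by move=> r Hr; have := H (Ordinal (Hr : r < (TB - p).+1)).
exists (Ordinal (Hl : l < p.+1)); apply/forallP => r; apply: H; by rewrite -ltnS ltn_ord.
Qed.

Lemma hasIn T (f : T -> bool) s : has f s -> exists2 x, List.In x s & f x.
Proof. elim: s => //= x s IH /orP[h|/IH[y h1 h2]]; [exists x; auto | exists y; auto]. Qed.
Lemma In_has T (f : T -> bool) s x : List.In x s -> f x -> has f s.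
Proof. elim: s => //= y s IH [->|h] fx; first by rewrite fx. by rewrite (IH h fx) orbT. Qed.
Lemma allIn T (f : T -> bool) s : all f s -> forall x, List.In x s -> f x.
Proof. elim: s => //= y s IH /andP[h1 h2] x [<-|h] //; exact: IH. Qed.
Lemma In_all T (f : T -> bool) s : (forall x, List.In x s -> f x) -> all f s.
Proof. elim: s => //= y s IH H; rewrite H /=; [apply: IH => x h; apply: H; auto | auto]. Qed.
Lemma has_imp T (f f' : T -> bool) s : (forall x, List.In x s -> f x -> f' x) -> has f s -> has f' s.
Proof. move=> H /hasIn[x h1 h2]; apply: (In_has h1); exact: H. Qed.
Lemma all_imp T (f f' : T -> bool) s : (forall x, List.In x s -> f x -> f' x) -> all f s -> all f' s.
Proof. move=> H h; apply: In_all => x hx; apply: H => //; exact: allIn h _ hx. Qed.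

Lemma mono1 TB G : forall p b, p < TB -> win TB G p b -> win TB G p.+1 b.
Proof.
elim/game_ind2: G => GL GR IHL IHR p b hp /winP [l hl H].
apply/winP; exists l; first exact: leqW.
move=> r hr; have hr' : r <= TB - p by lia.
have hpr : p + r < TB by lia.
have hpl : p - l < TB by lia.
move: (H r hr') => {H}; rewrite /body subSn // addSn.
case: b; case: ifP => _; (try case: ifP => _);
  try (apply: has_imp => g hg /=; first [move/orP=>[h|h]; apply/orP; [left|right]; by apply: (IHL g hg) | by apply: (IHL g hg)]);
  apply: all_imp => g hg /=; first [move/andP=>[h1 h2]; apply/andP; split; by apply: (IHR g hg) | by apply: (IHR g hg)].
Qed.

Lemma mono TB G p p' b : p <= p' <= TB -> win TB G p b -> win TB G p' b.
Proof.
move=> /andP[h1 h2]; have [k hk] : exists k, p' = p + k by exists (p' - p); lia.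
subst p'; clear h1.
move: h2; elim: k => [|k IH] h; first by rewrite addn0.
move=> w; rewrite addnS; apply: mono1; first lia.
apply: IH => //; lia.
Qed.

Lemma fb (P : bool) : ~ P -> P = false. Proof. by case: P. Qed.
Lemma tb (P : bool) : P -> P = true. Proof. by case: P. Qed.

Lemma kmark TB G : forall p, p < TB -> win TB G p true -> win TB G p.+1 false.
Proof.
elim/game_ind2: G => GL GR IHL IHR p hp /winP [l hl H].
apply/winP; exists l; first lia.
move=> r hr; rewrite /body.
have Hr1 : r.+1 <= TB - p by lia.
have Hr : r <= TB - p by lia.
have hpr : p + r < TB by lia.
case: ltnP => hlr.
  move: (H r Hr) (H r.+1 Hr1); rewrite /body.
  rewrite (fb (_ : ~ r < l)); last lia. rewrite (fb (_ : ~ l == r)); last lia.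
  rewrite (fb (_ : ~ r.+1 < l)); last lia. rewrite (fb (_ : ~ l == r.+1)); last lia.
  move=> h1 h2.
  apply: In_all => g hg; apply/andP; split.
    rewrite addSn; apply: IHR => //; exact: (allIn h1).
  by rewrite addSn -addnS; apply: (allIn h2).
case: eqP => hle.
  subst r; move: (H l.+1 Hr1); rewrite /body.
  rewrite (fb (_ : ~ l.+1 < l)); last lia. rewrite (fb (_ : ~ l == l.+1)); last lia.
  move=> h2.
  by apply: In_all => g hg; rewrite addSn -addnS; apply: (allIn h2).
have hrl : r < l by lia.
move: (H r Hr); rewrite /body hrl => h.
have hpl : p - l < TB by lia.
rewrite subSn //; apply: has_imp h => g hg /orP[h|h].
  exact: IHL.
exact: mono1.
Qed.

Definition phiT (fa fr hl : nat -> bool) (l r : nat) : bool :=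
  if r < l then fa l else if l == r then fr l else hl r.

Lemma minimax_true p q (fa fr hl : nat -> bool)
 (Hfrfa : forall l, l <= p -> fr l -> fa l)
 (Hfa : forall l, l < p -> fa l.+1 -> fr l)
 (Hfadec : forall l l', l <= l' -> l' <= p -> fa l' -> fa l)
 (Hhl : forall r r', r <= r' -> r' <= q -> hl r -> hl r') :
 (forall l, l <= p -> exists2 r, r <= q & ~~ phiT fa fr hl l r) ->
 exists2 r, r <= q & forall l, l <= p -> ~~ phiT fa fr hl l r.
Proof.
move=> H.
pose P := fun i => (i <= q) && ((i == 0) || ~~ hl i).
have ex : exists i, P i by exists 0.
have ub : forall i, P i -> i <= q by move=> i /andP[].
case: (@ex_maxnP P q ex ub) => rho /andP[hq hP] hmax.
have nfr : rho <= p -> ~~ fr rho.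
  move=> hrp; case: (H rho hrp) => r hr; rewrite /phiT.
  case: ltnP => h1.
    move=> nfa; apply/negP => f; move/negP: nfa; apply; exact: Hfrfa.
  case: eqP => h2; first by subst.
  move=> nh; exfalso.
  have : rho.+1 <= rho.
    apply: hmax; rewrite /P (_ : rho.+1 <= q); last lia.
    apply/orP; right; apply/negP => hh; move/negP: nh; apply; apply: (Hhl rho.+1) => //; lia.
  by rewrite ltnn.
exists rho => // l hlp; rewrite /phiT.
case: ltnP => h1.
  have := nfr ltac:(lia); apply: contra => fl.
  apply: Hfa; first lia.
  by apply: (Hfadec _ l) => //.
case: eqP => h2; first by subst; exact: nfr.
move: hP; have -> : (rho == 0) = false by apply/negP; lia.
by [].
Qed.

Definition phiF (hb hl fr : nat -> bool) (l r : nat) : bool :=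
  if l < r then hb r else if l == r then hl r else fr l.

Lemma minimax_false p q (hb hl fr : nat -> bool)
 (Hhbhl : forall r, r <= q -> hb r -> hl r)
 (Hhlhb : forall r, r < q -> hl r -> hb r.+1)
 (Hhb : forall r r', r <= r' -> r' <= q -> hb r -> hb r')
 (Hhl : forall r r', r <= r' -> r' <= q -> hl r -> hl r')
 (Hfr : forall l l', l <= l' -> l' <= p -> fr l' -> fr l) :
 (forall l, l <= p -> exists2 r, r <= q & ~~ phiF hb hl fr l r) ->
 exists2 r, r <= q & forall l, l <= p -> ~~ phiF hb hl fr l r.
Proof.
move=> H.
pose P := fun i => [&& (i <= q), ((i == 0) || ~~ hb i) & ~~ hl i].
have ex : exists i, P i.
  exists 0; rewrite /P /=.
  case: (H 0 (leq0n p)) => r hr; rewrite /phiF.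
  case: ltnP => h1.
    move=> nb; apply/negP => h0; move/negP: nb; apply.
    have -> : r = r.-1.+1 by lia.
    apply: Hhlhb; first lia.
    by apply: (Hhl 0) => //; lia.
  by have -> : r = 0 by lia.
have ub : forall i, P i -> i <= q by move=> i /andP[].
case: (@ex_maxnP P q ex ub) => rho /and3P[hq hP1 hP2] hmax.
exists rho => // l hlp; rewrite /phiF.
case: ltnP => h1.
  by move: hP1; have -> : (rho == 0) = false by apply/negP; lia.
case: eqP => h2; first by subst.
have h3 : rho.+1 <= p by lia.
have nfr : ~~ fr rho.+1.
  case: (H rho.+1 h3) => r hr; rewrite /phiF.
  case: ltnP => h4.
    move=> nb; exfalso.
    have : rho.+1 <= rho; last by rewrite ltnn.
    apply: hmax; rewrite /P (_ : rho.+1 <= q); last lia.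
    have nhl : ~~ hl rho.+1.
      apply/negP => hh; move/negP: nb; apply.
      have -> : r = r.-1.+1 by lia.
      apply: Hhlhb; first lia.
      by apply: (Hhl rho.+1) => //; lia.
    rewrite nhl andbT /=; apply/negP => hh; move/negP: nb; apply; apply: (Hhb rho.+1) => //; lia.
  case: eqP => h5.
    subst r => nh; exfalso.
    have : rho.+1 <= rho; last by rewrite ltnn.
    apply: hmax; rewrite /P hr nh andbT /=.
    apply/negP => hh; move/negP: nh; apply; exact: Hhbhl.
  by [].
apply: contra nfr; apply: Hfr => //; lia.
Qed.

Lemma has_eqIn T (f f' : T -> bool) s : (forall x, List.In x s -> f x = f' x) -> has f s = has f' s.
Proof. elim: s => //= x s IH H; rewrite H; [rewrite IH // => y hy; apply: H; auto | auto]. Qed.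
Lemma all_eqIn T (f f' : T -> bool) s : (forall x, List.In x s -> f x = f' x) -> all f s = all f' s.
Proof. elim: s => //= x s IH H; rewrite H; [rewrite IH // => y hy; apply: H; auto | auto]. Qed.
Lemma has_neg T (f : T -> bool) s : has (fun x => ~~ f x) s = ~~ all f s.
Proof. by elim: s => //= x s ->; rewrite negb_and. Qed.
Lemma all_neg T (f : T -> bool) s : all (fun x => ~~ f x) s = ~~ has f s.
Proof. by elim: s => //= x s ->; rewrite negb_or. Qed.

Section Det.
Variable TB : nat.

Lemma body_conj GL GR p b l r
  (IHL : forall g, List.In g GL -> forall p b, p <= TB -> win TB (conj g) (TB - p) b = ~~ win TB g p (~~ b))
  (IHR : forall g, List.In g GR -> forall p b, p <= TB -> win TB (conj g) (TB - p) b = ~~ win TB g p (~~ b)) :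
  p <= TB -> l <= p -> r <= TB - p ->
  body (win TB) (map conj GR) (map conj GL) (TB - p) b r l = ~~ body (win TB) GL GR p (~~ b) l r.
Proof.
move=> hp hl hr.
have e1 : TB - p - r = TB - (p + r) by lia.
have e2 : TB - p + l = TB - (p - l) by lia.
have hpr : p + r <= TB by lia.
have hpl : p - l <= TB by lia.
rewrite /body; case: b => /=.
  case: ltnP => h1.
    rewrite has_map -has_neg e1; apply: has_eqIn => g hg /=.
    by rewrite !IHR //= negb_and orbC.
  rewrite eq_sym; case: eqP => h2.
    rewrite has_map -has_neg e1; apply: has_eqIn => g hg /=; by rewrite IHR.
  rewrite all_map -all_neg e2; apply: all_eqIn => g hg /=; by rewrite IHL.
case: ltnP => h1.
  rewrite all_map -all_neg e2; apply: all_eqIn => g hg /=.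
  by rewrite !IHL //= negb_or.
rewrite eq_sym; case: eqP => h2.
  rewrite all_map -all_neg e2; apply: all_eqIn => g hg /=; by rewrite IHL.
rewrite has_map -has_neg e1; apply: has_eqIn => g hg /=; by rewrite IHR.
Qed.

Lemma det G : forall p b, p <= TB -> win TB (conj G) (TB - p) b = ~~ win TB G p (~~ b).
Proof.
elim/game_ind2: G => GL GR IHL IHR p b hp /=.
set q := TB - p.
have hq : TB - q = p by rewrite /q; lia.
apply/idP/idP.
  move/winP => [rho hrho Hc]; apply/negP => /winP [l hl Hg].
  have := Hc l ltac:(lia); rewrite body_conj //.
  by rewrite Hg.
move=> nw.
have Hex : forall l, l <= p -> exists2 r, r <= q & ~~ body (win TB) GL GR p (~~ b) l r.
  move=> l hl.
  case: (boolP [exists r : 'I_q.+1, ~~ body (win TB) GL GR p (~~ b) l r]) => [/existsP [r hr] | /existsPn hn].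
    by exists r => //; rewrite -ltnS ltn_ord.
  exfalso; move/negP: nw; apply; apply/winP; exists l => // r hr.
  by have := hn (Ordinal (hr : r < q.+1)); rewrite negbK.
suff [rho hrho Hr] : exists2 r, r <= q & forall l, l <= p -> ~~ body (win TB) GL GR p (~~ b) l r.
  apply/winP; exists rho => // l hl; rewrite hq in hl; rewrite /q body_conj //; first exact: Hr.
clear nw; case: b Hex => /= Hex.
  apply: (@minimax_false p q
    (fun r => all (fun g => win TB g (p + r) false && win TB g (p + r) true) GR)
    (fun r => all (fun g => win TB g (p + r) true) GR)
    (fun l => has (fun g => win TB g (p - l) false) GL)) => //.
  - move=> r hr; apply: all_imp => g _ /andP[] //.
  - move=> r hr; apply: all_imp => g _ h; apply/andP; split; rewrite addnS.
      apply: kmark => //; lia.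
    apply: mono1 => //; lia.
  - move=> r r' h1 h2; apply: all_imp => g _ /andP[a c]; apply/andP; split; apply: (mono _ a) || apply: (mono _ c); lia.
  - move=> r r' h1 h2; apply: all_imp => g _ a; apply: (mono _ a); lia.
  - move=> l l' h1 h2; apply: has_imp => g _ a; apply: (mono _ a); lia.
apply: (@minimax_true p q
    (fun l => has (fun g => win TB g (p - l) true || win TB g (p - l) false) GL)
    (fun l => has (fun g => win TB g (p - l) false) GL)
    (fun r => all (fun g => win TB g (p + r) true) GR)) => //.
- move=> l hl; apply: has_imp => g _ ->; by rewrite orbT.
- move=> l hl; apply: has_imp => g _ /orP[a|a]; have -> : p - l = (p - l.+1).+1 by lia.
    apply: kmark => //; lia.
  apply: mono1 => //; lia.
- move=> l l' h1 h2; apply: has_imp => g _ /orP[a|a]; apply/orP; [left|right]; apply: (mono _ a); lia.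
- move=> r r' h1 h2; apply: all_imp => g _ a; apply: (mono _ a); lia.
Qed.
End Det.

Lemma In_map A B (f : A -> B) s y : List.In y (map f s) <-> exists2 x, List.In x s & y = f x.
Proof.
elim: s => /= [|x s IH]; first by split => // [[]].
split.
  case=> [<-|h]; first by exists x; auto.
  by case: (proj1 IH h) => z h1 h2; exists z; auto.
case=> z [<-|h] e; first by left.
by right; apply: (proj2 IH); exists z.
Qed.
Lemma In_mapI A B (f : A -> B) s x : List.In x s -> List.In (f x) (map f s).
Proof. by move=> h; apply/In_map; exists x. Qed.
Lemma In_cat A (s t : seq A) x : List.In x (s ++ t) <-> List.In x s \/ List.In x t.
Proof. elim: s => /= [|y s IH]; [tauto | rewrite IH; tauto]. Qed.
Lemma map_eqIn A B (f g : A -> B) s : (forall x, List.In x s -> f x = g x) -> map f s = map g s.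
Proof. elim: s => //= x s IH H; rewrite H; [rewrite IH // => y hy; apply: H; auto | auto]. Qed.

Lemma game_eta G : G = Node (lefts G) (rights G). Proof. by case: G. Qed.
Lemma lefts_add G H : lefts (add G H) = map (fun g => add g H) (lefts G) ++ map (add G) (lefts H).
Proof. by case: G => ??; case: H => ??. Qed.
Lemma rights_add G H : rights (add G H) = map (fun g => add g H) (rights G) ++ map (add G) (rights H).
Proof. by case: G => ??; case: H => ??. Qed.
Lemma lefts_node L R : lefts (Node L R) = L. Proof. by []. Qed.
Lemma rights_node L R : rights (Node L R) = R. Proof. by []. Qed.
Lemma lefts_conj G : lefts (conj G) = map conj (rights G). Proof. by case: G. Qed.
Lemma rights_conj G : rights (conj G) = map conj (lefts G). Proof. by case: G. Qed.

Lemma mapmap A B C (f : B -> C) (g : A -> B) s : map f (map g s) = map (fun x => f (g x)) s.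
Proof. by elim: s => //= x s ->. Qed.

Lemma add_assoc A B C : add (add A B) C = add A (add B C).
Proof.
elim/game_ind2: A B C => AL AR IHAL IHAR B.
elim/game_ind2: B => BL BR IHBL IHBR C.
elim/game_ind2: C => CL CR IHCL IHCR.
rewrite [LHS]game_eta [RHS]game_eta; congr Node.
  rewrite !lefts_add !lefts_node !map_cat -catA !mapmap; congr (_ ++ _ ++ _); apply: map_eqIn => x hx.
  - by rewrite IHAL.
  - by rewrite IHBL.
  - by rewrite IHCL.
rewrite !rights_add !rights_node !map_cat -catA !mapmap; congr (_ ++ _ ++ _); apply: map_eqIn => x hx.
- by rewrite IHAR.
- by rewrite IHBR.
- by rewrite IHCR.
Qed.

Lemma conj_add A B : conj (add A B) = add (conj A) (conj B).
Proof.
elim/game_ind2: A B => AL AR IHAL IHAR B.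
elim/game_ind2: B => BL BR IHBL IHBR.
rewrite [LHS]game_eta [RHS]game_eta; congr Node.
  rewrite lefts_conj rights_add lefts_add !lefts_conj !rights_node map_cat !mapmap.
  congr (_ ++ _); apply: map_eqIn => x hx; [by rewrite IHAR | by rewrite IHBR].
rewrite rights_conj lefts_add rights_add !rights_conj !lefts_node map_cat !mapmap.
congr (_ ++ _); apply: map_eqIn => x hx; [by rewrite IHAL | by rewrite IHBL].
Qed.

Lemma conjK G : conj (conj G) = G.
Proof.
elim/game_ind2: G => GL GR IHL IHR /=; rewrite !mapmap; congr Node.
  by rewrite -[RHS]map_id; apply: map_eqIn => x hx; rewrite IHL.
by rewrite -[RHS]map_id; apply: map_eqIn => x hx; rewrite IHR.
Qed.

Lemma add0l X : add zero X = X.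
Proof.
elim/game_ind2: X => XL XR IHL IHR; rewrite [LHS]game_eta lefts_add rights_add /=.
congr Node; rewrite -[RHS]map_id; apply: map_eqIn => x hx; [exact: IHL | exact: IHR].
Qed.

Lemma add0r X : add X zero = X.
Proof.
elim/game_ind2: X => XL XR IHL IHR; rewrite [LHS]game_eta lefts_add rights_add /= !cats0.
congr Node; rewrite -[RHS]map_id; apply: map_eqIn => x hx; [exact: IHL | exact: IHR].
Qed.

Inductive sim : game -> game -> Prop :=
 | sim_intro GL GR HL HR :
   (forall g, List.In g GL -> exists2 h, List.In h HL & sim g h) ->
   (forall h, List.In h HL -> exists2 g, List.In g GL & sim g h) ->
   (forall g, List.In g GR -> exists2 h, List.In h HR & sim g h) ->
   (forall h, List.In h HR -> exists2 g, List.In g GR & sim g h) ->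
   sim (Node GL GR) (Node HL HR).

Lemma sim_inv GL GR H : sim (Node GL GR) H -> exists HL, exists HR, H = Node HL HR /\
   (forall g, List.In g GL -> exists2 h, List.In h HL & sim g h) /\
   (forall h, List.In h HL -> exists2 g, List.In g GL & sim g h) /\
   (forall g, List.In g GR -> exists2 h, List.In h HR & sim g h) /\
   (forall h, List.In h HR -> exists2 g, List.In g GR & sim g h).
Proof. move=> hs; inversion hs; subst; exists HL, HR; auto. Qed.

Lemma sim_refl G : sim G G.
Proof. elim/game_ind2: G => GL GR IHL IHR; constructor => g hg; exists g; auto. Qed.

Lemma sim_sym G H : sim G H -> sim H G.
Proof.
elim/game_ind2: G H => GL GR IHL IHR H /sim_inv [HL [HR [-> [H0 [H1 [H2 H3]]]]]]; constructor.
- move=> h /H1 [g hg s]; exists g => //; exact: IHL.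
- move=> g hg; case: (H0 g hg) => h hh s; exists h => //; exact: IHL hg _ s.
- move=> h /H3 [g hg s]; exists g => //; exact: IHR.
- move=> g hg; case: (H2 g hg) => h hh s; exists h => //; exact: IHR hg _ s.
Qed.

Lemma sim_trans G H K : sim G H -> sim H K -> sim G K.
Proof.
elim/game_ind2: G H K => GL GR IHL IHR H K /sim_inv [HL [HR [-> [H0 [H1 [H2 H3]]]]]] /sim_inv [KL [KR [-> [H4 [H5 [H6 H7]]]]]]; constructor.
- move=> g hg; case: (H0 g hg) => h hh s; case: (H4 h hh) => k hk s'; exists k => //; exact: IHL hg _ _ s s'.
- move=> k /H5 [h hh s'] ; case: (H1 h hh) => g hg s; exists g => //; exact: IHL hg _ _ s s'.
- move=> g hg; case: (H2 g hg) => h hh s; case: (H6 h hh) => k hk s'; exists k => //; exact: IHR hg _ _ s s'.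
- move=> k /H7 [h hh s'] ; case: (H3 h hh) => g hg s; exists g => //; exact: IHR hg _ _ s s'.
Qed.

Lemma body_corr (w : game -> nat -> bool -> bool) GL GR HL HR p b l r :
  (forall g, List.In g GL -> exists2 h, List.In h HL & forall k c, w g k c = w h k c) ->
  (forall h, List.In h HR -> exists2 g, List.In g GR & forall k c, w g k c = w h k c) ->
  body w GL GR p b l r -> body w HL HR p b l r.
Proof.
move=> HLc HRc; rewrite /body.
have Hh : forall f : game -> bool, (forall g h, (forall k c, w g k c = w h k c) -> f g -> f h)
   -> has f GL -> has f HL.
  move=> f Hf /hasIn [g hg fg]; case: (HLc g hg) => h hh e; apply: (In_has hh); exact: Hf fg.
have Ha : forall f : game -> bool, (forall g h, (forall k c, w g k c = w h k c) -> f g -> f h)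
   -> all f GR -> all f HR.
  move=> f Hf a; apply: In_all => h hh; case: (HRc h hh) => g hg e; apply: Hf e _; exact: allIn a _ hg.
case: b; repeat case: ifP => _; (apply: Hh || apply: Ha); move=> g h e; rewrite !e //.
Qed.

Lemma sim_win TB G H p b : sim G H -> win TB G p b = win TB H p b.
Proof.
elim/game_ind2: G H p b => GL GR IHL IHR H p b /sim_inv [HL [HR [-> [H0 [H1 [H2 H3]]]]]].
apply/idP/idP => /winP [l hl Hb]; apply/winP; exists l => // r hr; move: (Hb r hr); apply: body_corr.
- move=> g hg; case: (H0 g hg) => h hh s; exists h => // k c; exact: IHL.
- move=> h hh; case: (H3 h hh) => g hg s; exists g => // k c; exact: IHR.
- move=> h hh; case: (H1 h hh) => g hg s; exists g => // k c; symmetry; exact: IHL.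
- move=> g hg; case: (H2 g hg) => h hh s; exists h => // k c; symmetry; exact: IHR.
Qed.

Ltac inl_ := apply/In_cat; left; apply/In_map; eexists; [eassumption | reflexivity].
Ltac inr_ := apply/In_cat; right; apply/In_map; eexists; [eassumption | reflexivity].

Lemma sim_addl X : forall G H, sim G H -> sim (add G X) (add H X).
Proof.
elim/game_ind2: X => XL XR IHXL IHXR.
elim/game_ind2 => GL GR IHGL IHGR H hs; move: (hs) => /sim_inv [HL [HR [-> [H0 [H1 [H2 H3]]]]]].
rewrite [add (Node GL GR) _]game_eta [add (Node HL HR) _]game_eta !lefts_add !rights_add !lefts_node !rights_node.
constructor => y /In_cat [/In_map [g hg ->] | /In_map [x hx ->]].
- case: (H0 g hg) => h hh s; exists (add h (Node XL XR)); [inl_ | exact: IHGL].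
- exists (add (Node HL HR) x); [inr_ | exact: IHXL].
- case: (H1 g hg) => h hh s; exists (add h (Node XL XR)); [inl_ | exact: IHGL].
- exists (add (Node GL GR) x); [inr_ | exact: IHXL].
- case: (H2 g hg) => h hh s; exists (add h (Node XL XR)); [inl_ | exact: IHGR].
- exists (add (Node HL HR) x); [inr_ | exact: IHXR].
- case: (H3 g hg) => h hh s; exists (add h (Node XL XR)); [inl_ | exact: IHGR].
- exists (add (Node GL GR) x); [inr_ | exact: IHXR].
Qed.

Lemma sim_addr X : forall G H, sim G H -> sim (add X G) (add X H).
Proof.
elim/game_ind2: X => XL XR IHXL IHXR.
elim/game_ind2 => GL GR IHGL IHGR H hs; move: (hs) => /sim_inv [HL [HR [-> [H0 [H1 [H2 H3]]]]]].
rewrite [add _ (Node GL GR)]game_eta [add _ (Node HL HR)]game_eta !lefts_add !rights_add !lefts_node !rights_node.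
constructor => y /In_cat [/In_map [x hx ->] | /In_map [g hg ->]].
- exists (add x (Node HL HR)); [inl_ | exact: IHXL].
- case: (H0 g hg) => h hh s; exists (add (Node XL XR) h); [inr_ | exact: IHGL].
- exists (add x (Node GL GR)); [inl_ | exact: IHXL].
- case: (H1 g hg) => h hh s; exists (add (Node XL XR) h); [inr_ | exact: IHGL].
- exists (add x (Node HL HR)); [inl_ | exact: IHXR].
- case: (H2 g hg) => h hh s; exists (add (Node XL XR) h); [inr_ | exact: IHGR].
- exists (add x (Node GL GR)); [inl_ | exact: IHXR].
- case: (H3 g hg) => h hh s; exists (add (Node XL XR) h); [inr_ | exact: IHGR].
Qed.

Lemma sim_comm A B : sim (add A B) (add B A).
Proof.
elim/game_ind2: A B => AL AR IHAL IHAR.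
elim/game_ind2 => BL BR IHBL IHBR.
rewrite [add (Node AL AR) _]game_eta [add (Node BL BR) _]game_eta !lefts_add !rights_add !lefts_node !rights_node.
constructor => y /In_cat [/In_map [x hx ->] | /In_map [x hx ->]].
- exists (add (Node BL BR) x); [inr_ | exact: IHAL].
- exists (add x (Node AL AR)); [inl_ | exact: IHBL].
- exists (add (Node AL AR) x); [inr_ | exact: IHBL].
- exists (add x (Node BL BR)); [inl_ | exact: IHAL].
- exists (add (Node BL BR) x); [inr_ | exact: IHAR].
- exists (add x (Node AL AR)); [inl_ | exact: IHBR].
- exists (add (Node AL AR) x); [inr_ | exact: IHBR].
- exists (add x (Node BL BR)); [inl_ | exact: IHAR].
Qed.

Section Main.
Variable TB : nat.

Definition ge0 Q := forall X p b, p <= TB -> win TB X p b -> win TB (add Q X) p b.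

Lemma ge_trans A B C : game_ge TB A B -> game_ge TB B C -> game_ge TB A C.
Proof. move=> h1 h2 X p b hp w; apply: h1 => //; exact: h2. Qed.

Lemma ge_addr A B C : game_ge TB A B -> game_ge TB (add A C) (add B C).
Proof. move=> H X p b hp; rewrite !add_assoc; exact: H. Qed.

Lemma ge_addl A B C : game_ge TB A B -> game_ge TB (add C A) (add C B).
Proof.
move=> H X p b hp.
rewrite (sim_win _ _ _ (sim_addl X (sim_comm C A))) (sim_win _ _ _ (sim_addl X (sim_comm C B))).
exact: ge_addr.
Qed.

Lemma ge0_of Q Q' : ge0 Q -> game_ge TB Q' Q -> ge0 Q'.
Proof. move=> h1 h2 X p b hp w; apply: h2 => //; exact: h1. Qed.

Lemma det' Y p b : p <= TB -> win TB (conj Y) p b = ~~ win TB Y (TB - p) (~~ b).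
Proof. move=> hp; rewrite -det ?leq_subr // subKn //. Qed.

Lemma conj_anti A B : game_ge TB A B -> game_ge TB (conj B) (conj A).
Proof.
move=> H X p b hp.
have eA : add (conj A) X = conj (add A (conj X)) by rewrite conj_add conjK.
have eB : add (conj B) X = conj (add B (conj X)) by rewrite conj_add conjK.
rewrite eA eB !det' //; apply: contra; apply: H; lia.
Qed.

Definition goodQ Q := ge0 Q /\ (exists2 q0, List.In q0 (lefts Q) & ge0 q0) /\
  (forall qr, List.In qr (rights Q) -> game_ge TB qr Q).

Lemma QL Q XL XR p l : goodQ Q -> p <= TB -> win TB (Node XL XR) p false ->
  (forall r, r <= TB - p -> body (win TB) XL XR p false l r) ->
  forall t, l <= t -> t <= TB - p -> win TB (add Q (Node XL XR)) (p + t) true.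
Proof.
move=> [gQ [[q0 hq0 g0] gR]] hp wX Hl t.
have [n hn] : exists n, TB - p - t < n by exists (TB - p - t).+1.
elim: n t hn => [|n IH] t hn ht1 ht2; first lia.
rewrite [add Q _]game_eta; apply/winP; exists t; first lia.
move=> r hr; rewrite /body.
have hq0' : List.In (add q0 (Node XL XR)) (lefts (add Q (Node XL XR))).
  rewrite lefts_add; apply/In_cat; left; exact: In_mapI.
have e : p + t - t = p by lia.
case: ltnP => h1.
  apply: (In_has hq0'); rewrite e; apply/orP; right; exact: g0.
case: eqP => h2.
  apply: (In_has hq0'); rewrite e; exact: g0.
apply: In_all => y; rewrite rights_add => /In_cat [/In_map [qr hqr ->] | /In_map [xr hxr ->]].
  apply: (gR qr hqr); first lia.
  rewrite (_ : p + t + r = p + (t + r)); last lia.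
  apply: IH; lia.
apply: gQ; first lia.
have hx : win TB xr (p + t) true.
  move: (Hl t ht2); rewrite /body; case: ltnP => h3.
    by move/allIn => /(_ xr hxr) /andP[].
  rewrite (_ : l == t); last (apply/eqP; lia).
  by move/allIn => /(_ xr hxr).
apply: (mono _ hx); lia.
Qed.

Lemma main_inner S : (forall Q, List.In Q (rights S) -> goodQ Q) -> ge0 S.
Proof.
move=> HS X; elim/game_ind2: X => XL XR IHL IHR p b hp wX.
move: (wX) => /winP [l hl Hl].
rewrite [add S _]game_eta; apply/winP; exists l => // r hr; move: (Hl r hr); rewrite /body.
have hasS : forall k c c', k <= TB -> has (fun g => win TB g k c || win TB g k c') XL ->
    has (fun g => win TB g k c || win TB g k c') (lefts (add S (Node XL XR))).
  move=> k c c' hk /hasIn [x hx /orP hw].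
  apply: (In_has (x := add S x)); first by rewrite lefts_add; apply/In_cat; right; exact: In_mapI.
  by case: hw => w; apply/orP; [left|right]; apply: IHL.
have hasS1 : forall k c, k <= TB -> has (fun g => win TB g k c) XL ->
    has (fun g => win TB g k c) (lefts (add S (Node XL XR))).
  move=> k c hk /hasIn [x hx hw].
  apply: (In_has (x := add S x)); first by rewrite lefts_add; apply/In_cat; right; exact: In_mapI.
  exact: IHL.
have hpl : p - l <= TB by lia.
have hpr : p + r <= TB by lia.
case: b wX Hl => wX Hl.
  case: ifP => _; first exact: hasS.
  case: ifP => _; first exact: hasS1.
  move=> ha; apply: In_all => y; rewrite rights_add => /In_cat [/In_map [Q hQ ->] | /In_map [xr hxr ->]].
    case: (HS Q hQ) => gQ _; apply: gQ => //; apply: (mono _ wX); lia.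
  apply: IHR => //; exact: (allIn ha).
case: ifP => h1.
  move=> ha; apply: In_all => y; rewrite rights_add => /In_cat [/In_map [Q hQ ->] | /In_map [xr hxr ->]].
    have gQ := HS Q hQ; apply/andP; split.
      case: gQ => g _; apply: g => //; apply: (mono _ wX); lia.
    by apply: (QL gQ hp wX Hl) => //; apply: ltnW; rewrite h1.
  by move: (allIn ha hxr) => /andP[a c]; rewrite !IHR.
case: ifP => h2.
  move=> ha; apply: In_all => y; rewrite rights_add => /In_cat [/In_map [Q hQ ->] | /In_map [xr hxr ->]].
    by apply: (QL (HS Q hQ) hp wX Hl) => //; move/eqP: h2 => ->.
  apply: IHR => //; exact: (allIn ha).
exact: hasS1.
Qed.

Lemma number_opts G : is_number TB G ->
  (forall g, List.In g (lefts G) -> game_ge TB G g) /\ (forall g, List.In g (rights G) -> game_ge TB g G).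
Proof. case=> GL GR _ _ HL HR; split => g hg; [exact: (HL g hg).1 | exact: (HR g hg).1]. Qed.

Lemma number_ge0 G : is_number TB G -> ge0 (add G (conj G)).
Proof.
elim => GL GR HnL IHL HnR IHR HgtL HgtR.
set G0 := Node GL GR.
apply: main_inner => Q; rewrite rights_add rights_conj rights_node lefts_node => /In_cat [/In_map [gr hgr ->] | /In_map [y /In_map [gl hgl ->] ->]].
  have [_ oR] := number_opts (HnR gr hgr).
  split.
    apply: (ge0_of (IHR gr hgr)); apply: ge_addl; apply: conj_anti; exact: (HgtR gr hgr).1.
  split.
    exists (add gr (conj gr)); last exact: IHR.
    rewrite lefts_add lefts_conj; apply/In_cat; right; apply: In_mapI; exact: In_mapI.
  move=> qr; rewrite rights_add rights_conj => /In_cat [/In_map [grr hgrr ->] | /In_map [z /In_map [gl hgl ->] ->]].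
    apply: ge_addr; exact: oR.
  apply: ge_addl; apply: conj_anti; exact: (HgtL gl hgl).1.
have [oL _] := number_opts (HnL gl hgl).
split.
  apply: (ge0_of (IHL gl hgl)); apply: ge_addr; exact: (HgtL gl hgl).1.
split.
  exists (add gl (conj gl)); last exact: IHL.
  rewrite lefts_add; apply/In_cat; left; exact: In_mapI.
move=> qr; rewrite rights_add rights_conj => /In_cat [/In_map [gr hgr ->] | /In_map [z /In_map [gll hgll ->] ->]].
  apply: ge_addr; exact: (HgtR gr hgr).1.
apply: ge_addl; apply: conj_anti; exact: oL.
Qed.

Lemma rearr A B C D : sim (add (add A B) (add C D)) (add (add A C) (add B D)).
Proof.
rewrite !add_assoc; apply: sim_addr; rewrite -!add_assoc; apply: sim_addl; exact: sim_comm.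
Qed.

End Main.

Theorem mainTheorem8 (TB : nat) (G : game) :
  is_number TB G ->
  game_eq TB (add G (conj G)) zero /\
  (forall G' : game, game_eq TB (add G G') zero -> game_eq TB G' (conj G)).
Proof.
move=> hn; have g0 := number_ge0 hn.
have Z1 : game_ge TB (add G (conj G)) zero.
  by move=> X p b hp; rewrite add0l; exact: g0.
have Z2 : game_ge TB zero (add G (conj G)).
  move=> X p b hp w; rewrite add0l.
  case: (boolP (win TB X p b)) => // nX; exfalso.
  have h1 : win TB (conj X) (TB - p) (~~ b) by rewrite det // negbK.
  have h2 := g0 _ _ _ (leq_subr p TB) h1.
  have s : sim (add (add G (conj G)) (conj X)) (conj (add (add G (conj G)) X)).
    rewrite !conj_add conjK; apply: sim_addl; exact: sim_comm.
  move: h2; rewrite (sim_win _ _ _ s) det // negbK.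
  by rewrite w.
split; first by split.
move=> G' [E1 E2]; split.
  move=> X p b hp w.
  have w1 : win TB (add (add G G') (add (conj G) X)) p b by apply: E1; rewrite ?add0l.
  rewrite (sim_win _ _ _ (rearr G G' (conj G) X)) in w1.
  by have := Z2 _ _ _ hp w1; rewrite add0l.
move=> X p b hp w.
have w1 : win TB (add (add G (conj G)) (add G' X)) p b by apply: Z1; rewrite ?add0l.
rewrite (sim_win _ _ _ (rearr G (conj G) G' X)) in w1.
by have := E2 _ _ _ hp w1; rewrite add0l.
Qed.
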